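(* Let the observer be at $(1,0,0)$ and let $r=5/4$. For $\ell\ge 1$ let $R_\ell$ be the rectangle in the plane $x=0$ with vertices $(0,y_i,z_j)$, $i,j\in\{1,2\}$, where $$y_{1,2}=\frac{r}{\sqrt2}\mp\frac{\ell}{2},\qquad z_{1,2}=\frac{r}{\sqrt2}\mp\frac{1}{2\ell},$$ and let $\Omega(\ell)$ be the solid angle subtended by $R_\ell$ at the observer. Then the maximum of $\Omega(\ell)$ over $\ell\ge1$ is not attained at $\ell=1$; it is attained at $\ell_{\max}=1.66977459936793782921\ldots$. (In particular, among these rectangles of fixed area and fixed center, the one of largest solid angle need not be a square.)
   Context: The solid angle subtended at a point $P$ by a planar region $S$ is the area of the radial projection of $S$ onto the unit sphere centered at $P$. For an observer at $(x_0,0,0)$ with $x_0>0$ and the rectangle above, it equals $F(y_2,z_2)-F(y_1,z_2)-F(y_2,z_1)+F(y_1,z_1)$ where $F(y,z)=\arctan\!\big(yz/(x_0\sqrt{x_0^2+y^2+z^2})\big)$. *)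

(* Defs.v *)
From Stdlib Require Import Reals Lra.
Open Scope R_scope.

Definition Fcorner (x0 y z : R) : R :=
  atan (y * z / (x0 * sqrt (x0 ^ 2 + y ^ 2 + z ^ 2))).

Definition solid_angle_rect (x0 y1 y2 z1 z2 : R) : R :=
  Fcorner x0 y2 z2 - Fcorner x0 y1 z2 - Fcorner x0 y2 z1 + Fcorner x0 y1 z1.

Definition r_param : R := 5 / 4.

Definition y1 (l : R) : R := r_param / sqrt 2 - l / 2.
Definition y2 (l : R) : R := r_param / sqrt 2 + l / 2.
Definition z1 (l : R) : R := r_param / sqrt 2 - 1 / (2 * l).
Definition z2 (l : R) : R := r_param / sqrt 2 + 1 / (2 * l).

Definition Omega (l : R) : R := solid_angle_rect 1 (y1 l) (y2 l) (z1 l) (z2 l).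

(* Main.v *)
Require Import Defs.
From Stdlib Require Import Reals QArith Qreals Qround ZArith Lia Lra Psatz FunctionalExtensionality.
From Stdlib Require List.
Import Stdlib.Lists.List.ListNotations.
Open Scope R_scope.

Open Scope R_scope.

Inductive ex := X | CZ (z:Z) | Add (a b:ex) | Sub (a b:ex) | Mul (a b:ex) | Div (a b:ex)
  | Sqrt (a:ex) | Atan (a:ex) | Pow (a:ex) (n:nat) | KC.

Fixpoint evalR (e:ex) (x:R) : R := match e with
 | X => x | CZ z => IZR z
 | Add a b => evalR a x + evalR b x | Sub a b => evalR a x - evalR b x
 | Mul a b => evalR a x * evalR b x | Div a b => evalR a x / evalR b x
 | Sqrt a => sqrt (evalR a x) | Atan a => atan (evalR a x) | Pow a n => evalR a x ^ n
 | KC => r_param / sqrt 2 end.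

Fixpoint dom (e:ex) (x:R) : Prop := match e with
 | X => True | CZ _ => True
 | Add a b | Sub a b | Mul a b => dom a x /\ dom b x
 | Div a b => dom a x /\ dom b x /\ evalR b x <> 0
 | Sqrt a => dom a x /\ 0 < evalR a x
 | Atan a => dom a x | Pow a _ => dom a x | KC => True end.

Fixpoint hasX (e:ex) : bool := match e with
 | X => true | CZ _ => false
 | Add a b | Sub a b | Mul a b | Div a b => hasX a || hasX b
 | Sqrt a | Atan a | Pow a _ => hasX a | KC => false end.

Definition isZ0 e := match e with CZ Z0 => true | _ => false end.
Definition isZ1 e := match e with CZ (Zpos xH) => true | _ => false end.
Lemma isZ0_eq e : isZ0 e = true -> e = CZ 0.
Proof. destruct e; try discriminate; destruct z; try discriminate; reflexivity. Qed.
Lemma isZ1_eq e : isZ1 e = true -> e = CZ 1.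
Proof. destruct e; try discriminate; destruct z; try discriminate; destruct p; try discriminate; reflexivity. Qed.

Definition mkAdd a b := if isZ0 a then b else if isZ0 b then a else Add a b.
Definition mkSub a b := if isZ0 b then a else Sub a b.
Definition mkMul a b := if isZ0 a || isZ0 b then CZ 0 else
  if isZ1 a then b else if isZ1 b then a else Mul a b.
Definition mkDiv a b := if isZ0 a then CZ 0 else Div a b.

Lemma mkAdd_ok a b x : evalR (mkAdd a b) x = evalR a x + evalR b x.
Proof. unfold mkAdd. destruct (isZ0 a) eqn:H1. apply isZ0_eq in H1; subst; simpl; ring.
  destruct (isZ0 b) eqn:H2. apply isZ0_eq in H2; subst; simpl; ring. reflexivity. Qed.
Lemma mkSub_ok a b x : evalR (mkSub a b) x = evalR a x - evalR b x.
Proof. unfold mkSub. destruct (isZ0 b) eqn:H2. apply isZ0_eq in H2; subst; simpl; ring. reflexivity. Qed.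
Lemma mkMul_ok a b x : evalR (mkMul a b) x = evalR a x * evalR b x.
Proof. unfold mkMul. destruct (isZ0 a) eqn:H1. apply isZ0_eq in H1; subst; simpl; ring.
  destruct (isZ0 b) eqn:H2. apply isZ0_eq in H2; subst; simpl; ring. simpl.
  destruct (isZ1 a) eqn:H3. apply isZ1_eq in H3; subst; simpl; ring.
  destruct (isZ1 b) eqn:H4. apply isZ1_eq in H4; subst; simpl; ring. reflexivity. Qed.
Lemma mkDiv_ok a b x : evalR (mkDiv a b) x = evalR a x / evalR b x.
Proof. unfold mkDiv. destruct (isZ0 a) eqn:H1. apply isZ0_eq in H1; subst; simpl; unfold Rdiv; ring. reflexivity. Qed.

Fixpoint deriv (e:ex) : ex := if negb (hasX e) then CZ 0 else match e with
 | X => CZ 1 | CZ _ => CZ 0 | KC => CZ 0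
 | Add a b => mkAdd (deriv a) (deriv b)
 | Sub a b => mkSub (deriv a) (deriv b)
 | Mul a b => mkAdd (mkMul (deriv a) b) (mkMul a (deriv b))
 | Div a b => if hasX b then Div (mkSub (mkMul (deriv a) b) (mkMul a (deriv b))) (Pow b 2)
              else mkDiv (deriv a) b
 | Sqrt a => mkDiv (deriv a) (Mul (CZ 2) (Sqrt a))
 | Atan a => mkDiv (deriv a) (Add (CZ 1) (Pow a 2))
 | Pow a n => mkMul (mkMul (CZ (Z.of_nat n)) (Pow a (pred n))) (deriv a)
 end.

Lemma noX_const e : hasX e = false -> forall x y, evalR e x = evalR e y.
Proof. induction e; simpl; intros H x y; try discriminate; try reflexivity;
  try (apply orb_false_iff in H; destruct H as [H1 H2]; rewrite (IHe1 H1 x y), (IHe2 H2 x y); reflexivity);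
  rewrite (IHe H x y); reflexivity. Qed.

Lemma dpl_eq f x l l' : derivable_pt_lim f x l -> l = l' -> derivable_pt_lim f x l'.
Proof. intros H ->; exact H. Qed.

Lemma const_case e x : hasX e = false -> derivable_pt_lim (evalR e) x 0.
Proof. intro H. replace (evalR e) with (fun _ : R => evalR e 0).
  apply derivable_pt_lim_const. extensionality y. apply (noX_const e H). Qed.

Ltac casex t :=
  let Hx := fresh "Hx" in
  destruct (hasX t) eqn:Hx;
  [ simpl deriv; simpl in Hx; rewrite Hx; simpl negb; cbv iota
  | replace (deriv t) with (CZ 0) by (simpl; simpl in Hx; rewrite Hx; reflexivity);
    apply const_case; exact Hx ].

Theorem deriv_ok e x : dom e x -> derivable_pt_lim (evalR e) x (evalR (deriv e) x).
Proof.
  induction e; intro Hd.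
  - simpl. apply derivable_pt_lim_id.
  - simpl. apply derivable_pt_lim_const.
  - casex (Add e1 e2). destruct Hd as [H1 H2]. rewrite mkAdd_ok.
    change (evalR (Add e1 e2)) with (plus_fct (evalR e1) (evalR e2)).
    apply derivable_pt_lim_plus; auto.
  - casex (Sub e1 e2). destruct Hd as [H1 H2]. rewrite mkSub_ok.
    change (evalR (Sub e1 e2)) with (minus_fct (evalR e1) (evalR e2)).
    apply derivable_pt_lim_minus; auto.
  - casex (Mul e1 e2). destruct Hd as [H1 H2]. rewrite mkAdd_ok, !mkMul_ok.
    change (evalR (Mul e1 e2)) with (mult_fct (evalR e1) (evalR e2)).
    eapply dpl_eq. apply derivable_pt_lim_mult; auto. ring.
  - casex (Div e1 e2). destruct Hd as [H1 [H2 H3]].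
    change (evalR (Div e1 e2)) with (div_fct (evalR e1) (evalR e2)).
    destruct (hasX e2) eqn:Hx2.
    + eapply dpl_eq. apply (derivable_pt_lim_div _ _ _ _ _ (IHe1 H1) (IHe2 H2) H3). simpl. rewrite mkSub_ok, !mkMul_ok.
      unfold Rsqr; field; auto.
    + eapply dpl_eq. apply (derivable_pt_lim_div _ _ _ _ _ (IHe1 H1) (const_case e2 x Hx2) H3).
      rewrite mkDiv_ok. unfold Rsqr; field; auto.
  - casex (Sqrt e). destruct Hd as [H1 H2]. rewrite mkDiv_ok.
    change (evalR (Sqrt e)) with (comp sqrt (evalR e)).
    eapply dpl_eq. apply derivable_pt_lim_comp; auto. apply derivable_pt_lim_sqrt; auto.
    simpl. assert (0 < sqrt (evalR e x)) by (apply sqrt_lt_R0; auto). field. lra.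
  - casex (Atan e). rewrite mkDiv_ok.
    change (evalR (Atan e)) with (comp atan (evalR e)).
    eapply dpl_eq. apply derivable_pt_lim_comp; auto. apply derivable_pt_lim_atan.
    simpl. assert (0 <= evalR e x * (evalR e x * 1)) by nra. field. lra.
  - casex (Pow e n). rewrite !mkMul_ok.
    change (evalR (Pow e n)) with (comp (fun y => y ^ n) (evalR e)).
    eapply dpl_eq. apply derivable_pt_lim_comp; auto. apply derivable_pt_lim_pow.
    simpl. rewrite INR_IZR_INZ. ring.
  - simpl. apply derivable_pt_lim_const.
Qed.

Definition Qltb (x y : Q) : bool := negb (Qle_bool y x).
Lemma Qltb_ok x y : Qltb x y = true -> (x < y)%Q.
Proof. unfold Qltb. intro H. apply Qnot_le_lt. intro H'. apply Qle_bool_iff in H'. rewrite H' in H. discriminate. Qed.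
Lemma Qltb_R x y : Qltb x y = true -> Q2R x < Q2R y.
Proof. intro H. apply Qlt_Rlt, Qltb_ok, H. Qed.

Definition qmin (a b : Q) := if Qle_bool a b then a else b.
Definition qmax (a b : Q) := if Qle_bool a b then b else a.
Lemma qmin_R a b : Q2R (qmin a b) <= Q2R a /\ Q2R (qmin a b) <= Q2R b.
Proof. unfold qmin. destruct (Qle_bool a b) eqn:H.
  - apply Qle_bool_iff, Qle_Rle in H. lra.
  - assert (H': (b < a)%Q). { apply Qnot_le_lt. intro H'. apply Qle_bool_iff in H'. congruence. }
    apply Qlt_Rlt in H'. lra. Qed.
Lemma qmax_R a b : Q2R a <= Q2R (qmax a b) /\ Q2R b <= Q2R (qmax a b).
Proof. unfold qmax. destruct (Qle_bool a b) eqn:H.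
  - apply Qle_bool_iff, Qle_Rle in H. lra.
  - assert (H': (b < a)%Q). { apply Qnot_le_lt. intro H'. apply Qle_bool_iff in H'. congruence. }
    apply Qlt_Rlt in H'. lra. Qed.



Definition inI (I : Q*Q) (r : R) := Q2R (fst I) <= r <= Q2R (snd I).

Lemma mul_bounds a b c d x y : a <= x <= b -> c <= y <= d ->
  forall m M, m <= a*c -> m <= a*d -> m <= b*c -> m <= b*d ->
  a*c <= M -> a*d <= M -> b*c <= M -> b*d <= M -> m <= x*y <= M.
Proof. intros Hx Hy m M H1 H2 H3 H4 H5 H6 H7 H8.
  destruct (Rle_dec 0 x); destruct (Rle_dec 0 c); destruct (Rle_dec 0 d); split; nra. Qed.

Lemma Q2R0 : Q2R 0 = 0. Proof. unfold Q2R; simpl; field. Qed.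

Lemma inv_bounds l h y : l <= y <= h -> (0 < l \/ h < 0) -> / h <= / y <= / l.
Proof. intros [H1 H2] Hs. assert (0 < y*h) by (destruct Hs; nra). assert (0 < y*l) by (destruct Hs; nra).
  assert (h <> 0) by (destruct Hs; nra). assert (l <> 0) by (destruct Hs; nra). assert (y <> 0) by (destruct Hs; nra).
  split.
  - replace (/y) with (/h + (h - y) / (y*h)) by (field; auto).
    assert (0 <= (h - y) / (y*h)) by (unfold Rdiv; apply Rmult_le_pos; [lra | left; apply Rinv_0_lt_compat; lra]). lra.
  - replace (/l) with (/y + (y - l) / (y*l)) by (field; auto).
    assert (0 <= (y - l) / (y*l)) by (unfold Rdiv; apply Rmult_le_pos; [lra | left; apply Rinv_0_lt_compat; lra]). lra.
Qed.


Open Scope R_scope.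

Section F.
Variables (k s s2 : Z) (kF : Z*Z).
Hypothesis Hk : (0 <= k)%Z.
Hypothesis Hs : s = (2 ^ k)%Z.
Hypothesis Hs2 : s2 = (s * s)%Z.

Definition fl (x : Z) : Z := Z.shiftr x k.
Definition ce (x : Z) : Z := (- Z.shiftr (- x) k)%Z.

Definition inF (I : Z*Z) (r : R) := IZR (fst I) / IZR s <= r <= IZR (snd I) / IZR s.

Lemma s_pos : (0 < s)%Z.
Proof. rewrite Hs. apply Z.pow_pos_nonneg; lia. Qed.
Lemma s_posR : 0 < IZR s.
Proof. apply IZR_lt, s_pos. Qed.

Lemma fl_R x : IZR (fl x) <= IZR x / IZR s.
Proof. unfold fl. rewrite Z.shiftr_div_pow2 by auto. rewrite <- Hs.
  pose proof s_pos. pose proof s_posR. pose proof (Z.mul_div_le x s H).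
  apply Rmult_le_reg_r with (IZR s); auto. unfold Rdiv. rewrite Rmult_assoc, Rinv_l by lra.
  rewrite Rmult_1_r, <- mult_IZR. apply IZR_le. lia. Qed.
Lemma ce_R x : IZR x / IZR s <= IZR (ce x).
Proof. unfold ce. rewrite Z.shiftr_div_pow2 by auto. rewrite <- Hs.
  pose proof s_pos. pose proof s_posR. pose proof (Z.mul_div_le (-x) s H).
  apply Rmult_le_reg_r with (IZR s); auto. unfold Rdiv. rewrite Rmult_assoc, Rinv_l by lra.
  rewrite Rmult_1_r, <- mult_IZR. apply IZR_le. lia. Qed.

Definition fmul (A B : Z*Z) : Z*Z :=
  let (a,b) := A in let (c,d) := B in
  (fl (Z.min (Z.min (a*c) (a*d)) (Z.min (b*c) (b*d))),
   ce (Z.max (Z.max (a*c) (a*d)) (Z.max (b*c) (b*d)))).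

Lemma fmul_ok A B x y : inF A x -> inF B y -> inF (fmul A B) (x*y).
Proof. destruct A as [a b], B as [c d]. unfold inF, fmul; simpl. intros Hx Hy.
  pose proof s_posR as S.
  set (mn := Z.min (Z.min (a*c) (a*d)) (Z.min (b*c) (b*d))).
  set (mx := Z.max (Z.max (a*c) (a*d)) (Z.max (b*c) (b*d))).
  assert (K : IZR mn / (IZR s * IZR s) <= x * y <= IZR mx / (IZR s * IZR s)).
  { assert (E: forall u v, IZR u / IZR s * (IZR v / IZR s) = IZR (u*v) / (IZR s * IZR s))
      by (intros; rewrite mult_IZR; field; lra).
    apply (mul_bounds (IZR a / IZR s) (IZR b / IZR s) (IZR c / IZR s) (IZR d / IZR s)); auto;
    rewrite E; unfold Rdiv; apply Rmult_le_compat_r;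
    try (left; apply Rinv_0_lt_compat; nra); apply IZR_le; unfold mn, mx; lia. }
  pose proof (fl_R mn). pose proof (ce_R mx).
  replace (IZR mn / (IZR s * IZR s)) with (IZR mn / IZR s / IZR s) in K by (field; lra).
  replace (IZR mx / (IZR s * IZR s)) with (IZR mx / IZR s / IZR s) in K by (field; lra).
  split.
  - apply Rle_trans with (IZR mn / IZR s / IZR s); [|lra].
    unfold Rdiv at 1 3. apply Rmult_le_compat_r; [left; apply Rinv_0_lt_compat; lra | lra].
  - apply Rle_trans with (IZR mx / IZR s / IZR s); [lra|].
    unfold Rdiv at 1 2. apply Rmult_le_compat_r; [left; apply Rinv_0_lt_compat; lra | lra].
Qed.

Definition fsqr (A : Z*Z) : Z*Z :=
  let (l,h) := A in
  if Z.leb 0 l then (fl (l*l), ce (h*h))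
  else if Z.leb h 0 then (fl (h*h), ce (l*l))
  else (0%Z, ce (Z.max (l*l) (h*h))).

Lemma fsqr_ok A x : inF A x -> inF (fsqr A) (x*x).
Proof. destruct A as [l h]. unfold inF, fsqr; simpl. intro Hx. pose proof s_posR as S.
  assert (E: forall u v, IZR u / IZR s * (IZR v / IZR s) = IZR (u*v) / IZR s / IZR s)
      by (intros; rewrite mult_IZR; field; lra).
  assert (M: forall u v, u <= v -> u / IZR s <= v / IZR s)
      by (intros; unfold Rdiv; apply Rmult_le_compat_r; [left; apply Rinv_0_lt_compat; lra|lra]).
  assert (Hl : IZR l / IZR s <= x) by lra. assert (Hh : x <= IZR h / IZR s) by lra.
  destruct (Z.leb 0 l) eqn:E1.
  { apply Z.leb_le in E1. simpl. pose proof (fl_R (l*l)); pose proof (ce_R (h*h)).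
    assert (0 <= IZR l / IZR s) by (unfold Rdiv; apply Rmult_le_pos; [apply IZR_le; lia| left; apply Rinv_0_lt_compat; lra]).
    split.
    - apply Rle_trans with (IZR (l*l) / IZR s / IZR s). apply M; auto. rewrite <- E. nra.
    - apply Rle_trans with (IZR (h*h) / IZR s / IZR s). rewrite <- E. nra. apply M; auto. }
  destruct (Z.leb h 0) eqn:E2.
  { apply Z.leb_le in E2. simpl. pose proof (fl_R (h*h)); pose proof (ce_R (l*l)).
    assert (IZR h / IZR s <= 0).
    { assert (IZR h <= 0) by (apply IZR_le; lia). assert (0 < / IZR s) by (apply Rinv_0_lt_compat; lra). unfold Rdiv; nra. }
    split.
    - apply Rle_trans with (IZR (h*h) / IZR s / IZR s). apply M; auto. rewrite <- E. nra.
    - apply Rle_trans with (IZR (l*l) / IZR s / IZR s). rewrite <- E. nra. apply M; auto. }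
  simpl. pose proof (ce_R (Z.max (l*l) (h*h))).
  assert (IZR (l*l) <= IZR (Z.max (l*l) (h*h))) by (apply IZR_le; lia).
  assert (IZR (h*h) <= IZR (Z.max (l*l) (h*h))) by (apply IZR_le; lia).
  split. unfold Rdiv; rewrite Rmult_0_l. nra.
  apply Rle_trans with (IZR (Z.max (l*l) (h*h)) / IZR s / IZR s); [|apply M; auto].
  apply Rle_trans with (Rmax (IZR (l*l) / IZR s / IZR s) (IZR (h*h) / IZR s / IZR s)).
  rewrite <- !E. destruct (Rle_dec 0 x); [apply Rle_trans with (IZR h / IZR s * (IZR h / IZR s)); [nra | apply Rmax_r] |
      apply Rle_trans with (IZR l / IZR s * (IZR l / IZR s)); [nra | apply Rmax_l]].
  apply Rmax_lub; unfold Rdiv; apply Rmult_le_compat_r; try (left; apply Rinv_0_lt_compat; lra);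
   apply Rmult_le_compat_r; try (left; apply Rinv_0_lt_compat; lra); auto.
Qed.

Fixpoint fpow_gen (A : Z*Z) (n : nat) : Z*Z := match n with
  | O => (s, s) | S n => fmul A (fpow_gen A n) end.
Definition fpow (A : Z*Z) (n : nat) : Z*Z := match n with
  | 2%nat => fsqr A | _ => fpow_gen A n end.

Lemma fpow_gen_ok A x n : inF A x -> inF (fpow_gen A n) (x ^ n).
Proof. intro H. pose proof s_posR. induction n; simpl.
  - unfold inF; simpl. unfold Rdiv; rewrite Rinv_r by lra. lra.
  - apply fmul_ok; auto. Qed.
Lemma fpow_ok A x n : inF A x -> inF (fpow A n) (x ^ n).
Proof. intro H. destruct n as [|[|[|n]]]; try (apply fpow_gen_ok; auto).
  simpl. replace (x * (x * 1)) with (x * x) by ring. apply fsqr_ok; auto. Qed.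

Definition finv (A : Z*Z) : Z*Z := let (l,h) := A in (Z.div s2 h, (- Z.div (- s2) l)%Z).

Lemma R_le_div (a b c : Z) : (0 < b)%Z -> (c * b <= a)%Z -> IZR c <= IZR a / IZR b.
Proof. intros H1 H2. assert (0 < IZR b) by (apply IZR_lt; lia).
  apply Rmult_le_reg_r with (IZR b); auto. unfold Rdiv; rewrite Rmult_assoc, Rinv_l by lra.
  rewrite Rmult_1_r, <- mult_IZR. apply IZR_le. lia. Qed.
Lemma R_div_le (a b c : Z) : (0 < b)%Z -> (a <= c * b)%Z -> IZR a / IZR b <= IZR c.
Proof. intros H1 H2. assert (0 < IZR b) by (apply IZR_lt; lia).
  apply Rmult_le_reg_r with (IZR b); auto. unfold Rdiv; rewrite Rmult_assoc, Rinv_l by lra.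
  rewrite Rmult_1_r, <- mult_IZR. apply IZR_le. lia. Qed.
Lemma Rdiv_opp (a b : Z) : (b <> 0)%Z -> IZR a / IZR b = IZR (-a) / IZR (-b).
Proof. intro H. assert (IZR b <> 0) by (apply not_0_IZR; auto). rewrite !opp_IZR. field; auto. Qed.

Lemma finv_ok l h y : inF (l,h) y -> (0 < l \/ h < 0)%Z -> inF (finv (l,h)) (/ y).
Proof. unfold inF, finv; simpl. intros Hy Hsg. pose proof s_pos. pose proof s_posR.
  assert (Hs' : (0 < IZR l / IZR s) \/ (IZR h / IZR s < 0)).
  { assert (0 < / IZR s) by (apply Rinv_0_lt_compat; lra).
    destruct Hsg; [left|right]; unfold Rdiv.
    assert (0 < IZR l) by (apply IZR_lt; lia). nra.
    assert (IZR h < 0) by (apply IZR_lt; lia). nra. }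
  destruct (inv_bounds _ _ _ Hy Hs') as [A B].
  assert (Llh : (l <= h)%Z).
  { apply le_IZR. apply Rmult_le_reg_r with (/ IZR s). apply Rinv_0_lt_compat; lra. unfold Rdiv in Hy; lra. }
  assert (hne : h <> 0%Z) by lia. assert (lne : l <> 0%Z) by lia.
  assert (hR : IZR h <> 0) by (apply not_0_IZR; auto). assert (lR : IZR l <> 0) by (apply not_0_IZR; auto).
  replace (/ (IZR h / IZR s)) with (IZR s2 / IZR h / IZR s) in A by (rewrite Hs2, mult_IZR; field; lra).
  replace (/ (IZR l / IZR s)) with (IZR s2 / IZR l / IZR s) in B by (rewrite Hs2, mult_IZR; field; lra).
  assert (M: forall u v, u <= v -> u / IZR s <= v / IZR s)
      by (intros; unfold Rdiv; apply Rmult_le_compat_r; [left; apply Rinv_0_lt_compat; lra|lra]).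
  split.
  - apply Rle_trans with (IZR s2 / IZR h / IZR s); auto. apply M.
    destruct Hsg.
    + apply R_le_div. lia. pose proof (Z.mul_div_le s2 h ltac:(lia)). lia.
    + rewrite (Rdiv_opp s2 h) by lia. apply R_le_div. lia. rewrite <- Z.div_opp_opp by lia.
      pose proof (Z.mul_div_le (-s2) (-h) ltac:(lia)). lia.
  - apply Rle_trans with (IZR s2 / IZR l / IZR s); auto. apply M.
    destruct Hsg.
    + apply R_div_le. lia. pose proof (Z.mul_div_le (-s2) l ltac:(lia)). lia.
    + rewrite (Rdiv_opp s2 l) by lia. apply R_div_le. lia.
      pose proof (Z.div_opp_opp s2 (-l) ltac:(lia)) as Q. rewrite Z.opp_involutive in Q. rewrite Q.
      pose proof (Z.mul_div_le s2 (-l) ltac:(lia)). lia.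
Qed.

Lemma fsqrt_ok l h x : inF (l,h) x -> (0 < l)%Z ->
  inF (Z.sqrt (l*s), (Z.sqrt (h*s) + 1)%Z) (sqrt x).
Proof. unfold inF; simpl. intros Hx Hl. pose proof s_pos. pose proof s_posR.
  assert (Llh : (l <= h)%Z).
  { apply le_IZR. apply Rmult_le_reg_r with (/ IZR s). apply Rinv_0_lt_compat; lra. unfold Rdiv in Hx; lra. }
  destruct (Z.sqrt_spec (l*s) ltac:(nia)) as [A1 _].
  destruct (Z.sqrt_spec (h*s) ltac:(nia)) as [_ B1].
  set (r := Z.sqrt (l*s)) in *. set (R := Z.sqrt (h*s)) in *.
  assert (r0 : (0 <= r)%Z) by apply Z.sqrt_nonneg. assert (R0 : (0 <= R)%Z) by apply Z.sqrt_nonneg.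
  rewrite <- Z.add_1_r in B1.
  assert (A2 : IZR r * IZR r <= IZR l * IZR s) by (rewrite <- !mult_IZR; apply IZR_le; lia).
  assert (B2 : IZR h * IZR s <= IZR (R + 1) * IZR (R+1)) by (rewrite <- !mult_IZR; apply IZR_le; lia).
  assert (rR : 0 <= IZR r) by (apply IZR_le; lia). assert (RR : 0 <= IZR (R+1)) by (apply IZR_le; lia).
  split.
  - rewrite <- (sqrt_square (IZR r / IZR s)).
    2:{ unfold Rdiv; apply Rmult_le_pos; auto. left; apply Rinv_0_lt_compat; lra. }
    apply sqrt_le_1_alt. apply Rle_trans with (IZR l / IZR s); [|lra].
    replace (IZR r / IZR s * (IZR r / IZR s)) with ((IZR r * IZR r) / IZR s / IZR s) by (field; lra).
    replace (IZR l / IZR s) with ((IZR l * IZR s) / IZR s / IZR s) by (field; lra).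
    unfold Rdiv. apply Rmult_le_compat_r. left; apply Rinv_0_lt_compat; lra.
    apply Rmult_le_compat_r. left; apply Rinv_0_lt_compat; lra. auto.
  - rewrite <- (sqrt_square (IZR (R+1) / IZR s)).
    2:{ unfold Rdiv; apply Rmult_le_pos; auto. left; apply Rinv_0_lt_compat; lra. }
    apply sqrt_le_1_alt. apply Rle_trans with (IZR h / IZR s); [lra|].
    replace (IZR (R+1) / IZR s * (IZR (R+1) / IZR s)) with ((IZR (R+1) * IZR (R+1)) / IZR s / IZR s) by (field; lra).
    replace (IZR h / IZR s) with ((IZR h * IZR s) / IZR s / IZR s) by (field; lra).
    unfold Rdiv. apply Rmult_le_compat_r. left; apply Rinv_0_lt_compat; lra.
    apply Rmult_le_compat_r. left; apply Rinv_0_lt_compat; lra. auto.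
Qed.

Fixpoint evalF (e : ex) (I : Z*Z) : option (Z*Z) := match e with
 | X => Some I
 | CZ z => Some ((z*s)%Z, (z*s)%Z)
 | Add a b => match evalF a I, evalF b I with
     | Some (l1,h1), Some (l2,h2) => Some ((l1+l2)%Z, (h1+h2)%Z) | _, _ => None end
 | Sub a b => match evalF a I, evalF b I with
     | Some (l1,h1), Some (l2,h2) => Some ((l1-h2)%Z, (h1-l2)%Z) | _, _ => None end
 | Mul a b => match evalF a I, evalF b I with
     | Some A, Some B => Some (fmul A B) | _, _ => None end
 | Div a b => match evalF a I, evalF b I with
     | Some A, Some (l2,h2) => if Z.ltb 0 l2 || Z.ltb h2 0 then Some (fmul A (finv (l2,h2))) else None
     | _, _ => None end
 | Sqrt a => match evalF a I with
     | Some (l,h) => if Z.ltb 0 l then Some (Z.sqrt (l*s), (Z.sqrt (h*s) + 1)%Z) else None | None => None end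
 | Atan a => match evalF a I with Some _ => Some ((-2*s)%Z, (2*s)%Z) | None => None end
 | Pow a n => match evalF a I with Some A => Some (fpow A n) | None => None end
 | KC => Some kF
 end.

Hypothesis kF_ok : inF kF (r_param / sqrt 2).

Lemma atan_in y : inF ((-2*s)%Z, (2*s)%Z) (atan y).
Proof. pose proof s_posR. unfold inF; cbn [fst snd].
    destruct (atan_bound y). pose proof PI_4. rewrite !mult_IZR.
    replace (IZR (-2) * IZR s / IZR s) with (-2) by (field; lra).
    replace (IZR 2 * IZR s / IZR s) with 2 by (field; lra). lra. Qed.

Theorem evalF_ok e I J x : evalF e I = Some J -> inF I x -> dom e x /\ inF J (evalR e x).
Proof.
  pose proof s_posR as SP.
  assert (M: forall u v, u <= v -> u / IZR s <= v / IZR s)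
      by (intros; unfold Rdiv; apply Rmult_le_compat_r; [left; apply Rinv_0_lt_compat; lra|lra]).
  revert J. induction e; intros J H Hx; cbn [evalF] in H; cbn [evalR dom].
  - injection H; intros <-; auto.
  - injection H; intros <-. unfold inF; simpl. rewrite mult_IZR. replace (IZR z * IZR s / IZR s) with (IZR z) by (field; lra). lra.
  - destruct (evalF e1 I) as [[l1 h1]|]; [|discriminate]. destruct (evalF e2 I) as [[l2 h2]|]; [|discriminate].
    injection H; intros <-. destruct (IHe1 _ eq_refl Hx) as [D1 [A1 B1]]. destruct (IHe2 _ eq_refl Hx) as [D2 [A2 B2]].
    simpl in *. split; auto. unfold inF; simpl. rewrite !plus_IZR.
    replace ((IZR l1 + IZR l2) / IZR s) with (IZR l1 / IZR s + IZR l2 / IZR s) by (field; lra).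
    replace ((IZR h1 + IZR h2) / IZR s) with (IZR h1 / IZR s + IZR h2 / IZR s) by (field; lra). lra.
  - destruct (evalF e1 I) as [[l1 h1]|]; [|discriminate]. destruct (evalF e2 I) as [[l2 h2]|]; [|discriminate].
    injection H; intros <-. destruct (IHe1 _ eq_refl Hx) as [D1 [A1 B1]]. destruct (IHe2 _ eq_refl Hx) as [D2 [A2 B2]].
    simpl in *. split; auto. unfold inF; simpl. rewrite !minus_IZR.
    replace ((IZR l1 - IZR h2) / IZR s) with (IZR l1 / IZR s - IZR h2 / IZR s) by (field; lra).
    replace ((IZR h1 - IZR l2) / IZR s) with (IZR h1 / IZR s - IZR l2 / IZR s) by (field; lra). lra.
  - destruct (evalF e1 I) as [A|]; [|discriminate]. destruct (evalF e2 I) as [B|]; [|discriminate].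
    injection H; intros <-. destruct (IHe1 _ eq_refl Hx) as [D1 K1]. destruct (IHe2 _ eq_refl Hx) as [D2 K2].
    split; auto. apply fmul_ok; auto.
  - destruct (evalF e1 I) as [A|]; [|discriminate]. destruct (evalF e2 I) as [[l2 h2]|]; [|discriminate].
    destruct (Z.ltb 0 l2 || Z.ltb h2 0) eqn:E; [|discriminate].
    injection H; intros <-. destruct (IHe1 _ eq_refl Hx) as [D1 K1]. destruct (IHe2 _ eq_refl Hx) as [D2 K2].
    assert (Hsg : (0 < l2 \/ h2 < 0)%Z).
    { apply orb_true_iff in E. destruct E as [E|E]; apply Z.ltb_lt in E; auto. }
    pose proof (finv_ok l2 h2 _ K2 Hsg) as K3.
    split.
    + split; auto. split; auto. intro Z0. rewrite Z0 in K2. unfold inF in K2; simpl in K2.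
      destruct Hsg as [Hsg|Hsg].
      * assert (0 < IZR l2) by (apply IZR_lt; auto). assert (0 < IZR l2 / IZR s) by (unfold Rdiv; apply Rmult_lt_0_compat; auto; apply Rinv_0_lt_compat; lra). lra.
      * assert (IZR h2 < 0) by (apply IZR_lt; auto). assert (0 < / IZR s) by (apply Rinv_0_lt_compat; lra).
        assert (IZR h2 / IZR s < 0) by (unfold Rdiv; nra). lra.
    + unfold Rdiv. apply fmul_ok; auto.
  - destruct (evalF e I) as [[l h]|]; [|discriminate].
    destruct (Z.ltb 0 l) eqn:E; [|discriminate]. injection H; intros <-.
    destruct (IHe _ eq_refl Hx) as [D K]. apply Z.ltb_lt in E.
    split. split; auto. unfold inF in K; simpl in K.
    assert (0 < IZR l) by (apply IZR_lt; auto). assert (0 < IZR l / IZR s) by (unfold Rdiv; apply Rmult_lt_0_compat; auto; apply Rinv_0_lt_compat; lra). lra.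
    apply fsqrt_ok; auto.
  - destruct (evalF e I) as [A|]; [|discriminate]. injection H; intros <-.
    destruct (IHe _ eq_refl Hx) as [D _]. split; auto. apply atan_in.
  - destruct (evalF e I) as [A|]; [|discriminate]. injection H; intros <-.
    destruct (IHe _ eq_refl Hx) as [D K]. split; auto. apply fpow_ok; auto.
  - injection H; intros <-. simpl. auto.
Qed.
End F.

Open Scope R_scope.

Definition cc : ex := Div (Div (CZ 5) (CZ 4)) (Sqrt (CZ 2)).
Definition k0F (s : Z) : Z*Z := ((-2*s)%Z, (2*s)%Z).
Definition ev (k : Z) e (I : Z*Z) : option (Z*Z) :=
  let s := (2^k)%Z in let s2 := (s*s)%Z in
  match evalF k s s2 (k0F s) cc (0,0)%Z with Some kF => evalF k s s2 kF e I | None => None end.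
Definition box (k : Z) (lo hi : Q) : Z*Z := let s := (2^k)%Z in (Qfloor (lo * (s#1)), Qceiling (hi * (s#1))).
Definition toQ (k : Z) (m : Z) : Q := Qmake m (Z.to_pos (2^k)).

Definition Sx y z := Sqrt (Add (Add (CZ 1) (Pow y 2)) (Pow z 2)).
Definition Pt y z := Div z (Mul (Add (CZ 1) (Pow y 2)) (Sx y z)).
Definition Qt y z := Div y (Mul (Add (CZ 1) (Pow z 2)) (Sx y z)).
Definition ty1 := Sub KC (Div X (CZ 2)).
Definition ty2 := Add KC (Div X (CZ 2)).
Definition tz1 := Sub KC (Div (CZ 1) (Mul (CZ 2) X)).
Definition tz2 := Add KC (Div (CZ 1) (Mul (CZ 2) X)).
Definition Dn := Sub (Mul (Div (CZ 1) (CZ 2)) (Sub (Sub (Add (Pt ty2 tz2) (Pt ty1 tz2)) (Pt ty2 tz1)) (Pt ty1 tz1)))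
   (Mul (Div (CZ 1) (Mul (CZ 2) (Pow X 2))) (Add (Sub (Qt ty2 tz2) (Qt ty1 tz2)) (Sub (Qt ty2 tz1) (Qt ty1 tz1)))).
Definition dDn := Eval vm_compute in deriv Dn.

Definition Gc (w z : ex) : ex :=
  Atan (Div (Mul w z) (Sqrt (Add (Mul (Mul (CZ 4) (Pow X 2)) (Add (CZ 1) (Pow z 2))) (Pow w 2)))).
Definition tw1 := Sub (Mul (Mul (CZ 2) KC) X) (CZ 1).
Definition tw2 := Add (Mul (Mul (CZ 2) KC) X) (CZ 1).
Definition sz1 := Sub KC (Div X (CZ 2)).
Definition sz2 := Add KC (Div X (CZ 2)).
Definition ET : ex := Add (Sub (Sub (Gc tw2 sz2) (Gc tw1 sz2)) (Gc tw2 sz1)) (Gc tw1 sz1).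
Definition dET := Eval vm_compute in deriv ET.

Definition mid (lo hi : Q) : Q := Qred ((lo + hi) * (1#2))%Q.
Definition mvt (k : Z) (sg : bool) (lo hi : Q) : bool :=
  let m := mid lo hi in
  match ev k Dn (box k lo hi), ev k dDn (box k lo hi), ev k Dn (box k m m), ev k Dn (box k lo lo), ev k Dn (box k hi hi) with
  | Some _, Some (m1,M1), Some (dm,um), Some (dl,ul), Some (dh,uh) =>
    let r := (qmax (- toQ k m1) (toQ k M1) * qmax (hi - m) (m - lo))%Q in
    if sg then
      Qltb 0 (toQ k dm - r) || (Z.leb M1 0 && Z.ltb 0 dh) || (Z.leb 0 m1 && Z.ltb 0 dl)
    else
      Qltb (toQ k um + r) 0 || (Z.leb M1 0 && Z.ltb ul 0) || (Z.leb 0 m1 && Z.ltb uh 0)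
  | _, _, _, _, _ => false end.
Definition mvt2 (sg : bool) (lo hi : Q) : bool := if mvt 40 sg lo hi then true else mvt 110 sg lo hi.
Definition ddpos (k : Z) (lo hi : Q) : bool :=
  match ev k Dn (box k lo hi), ev k dDn (box k lo hi) with Some _, Some (m1,_) => Z.ltb 0 m1 | _, _ => false end.
Definition tpos (k : Z) (lo hi : Q) : bool :=
  match ev k ET (box k lo hi), ev k dET (box k lo hi) with Some _, Some (m1,_) => Z.ltb 0 m1 | _, _ => false end.

Fixpoint chk (t : Q -> Q -> bool) (x0 : Q) (l : list Q) : bool :=
  match l with nil => true | cons x1 r => if t x0 x1 then chk t x1 r else false end.
Local Open Scope Q_scope.
Definition Lnear1 : list Q := [8405385 # 8388608; 4211081 # 4194304; 8438939 # 8388608; 2113929 # 2097152; 101 # 100].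
Definition Lpos : list Q := [16978543 # 16777216; 4261413 # 4194304; 8589935 # 8388608; 2164261 # 2097152; 8724153 # 8388608; 4395631 # 4194304; 17850959 # 16777216; 9059697 # 8388608; 18387829 # 16777216; 2332033 # 2097152; 18924699 # 16777216; 9596567 # 8388608; 19461569 # 16777216; 2499805 # 2097152; 20535311 # 16777216; 10536091 # 8388608; 21609053 # 16777216; 5536481 # 4194304; 22682795 # 16777216; 11609833 # 8388608; 23756537 # 16777216; 759169 # 524288; 24830279 # 16777216; 12683575 # 8388608; 25904021 # 16777216; 6610223 # 4194304; 26977763 # 16777216; 13623099 # 8388608; 27514633 # 16777216; 6945767 # 4194304; 13958643 # 8388608; 166977459936793782921 # 100000000000000000000].
Definition Lneg : list Q := [7011931 # 4194304; 28114833 # 16777216; 28249051 # 16777216; 14258743 # 8388608; 28785921 # 16777216; 3665349 # 2097152; 29859663 # 16777216; 15198267 # 8388608; 7867569 # 4194304; 16272009 # 8388608; 1050555 # 524288; 17345751 # 8388608; 18419493 # 8388608; 19493235 # 8388608; 20566977 # 8388608; 21640719 # 8388608; 22714461 # 8388608; 49723889 # 16777216; 6752357 # 2097152; 58313823 # 16777216; 31304395 # 8388608; 66903757 # 16777216; 18873423 # 4194304; 84083627 # 16777216; 46336781 # 8388608; 101263497 # 16777216; 59221683 # 8388608; 135623235 # 16777216; 4775097 # 524288; 10 # 1].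
Definition Ltail : list Q := [41943 # 2097152; 1006633 # 16777216; 1342177 # 16777216; 1 # 10].

Open Scope R_scope.

Open Scope R_scope.

Lemma mv_basic f f' lo hi u v : (forall y, lo <= y <= hi -> derivable_pt_lim f y (f' y)) ->
  lo <= u -> u <= v -> v <= hi -> exists c, u <= c <= v /\ f v = f u + f' c * (v - u).
Proof. intros Hd H1 H2 H3. destruct (Req_dec u v) as [E|E].
  - subst. exists v. split. lra. ring.
  - destruct (MVT_cor3 f f' u v) as [c [Hc1 [Hc2 Hc3]]]. lra.
    intros. apply Hd. lra. exists c. split; [lra|]. exact Hc3. Qed.

Lemma mono_le f f' lo hi : (forall y, lo <= y <= hi -> derivable_pt_lim f y (f' y)) ->
  (forall y, lo <= y <= hi -> 0 <= f' y) -> forall u v, lo <= u -> u <= v -> v <= hi -> f u <= f v.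
Proof. intros Hd Hp u v H1 H2 H3. destruct (mv_basic f f' lo hi u v Hd H1 H2 H3) as [c [Hc E]].
  rewrite E. assert (0 <= f' c) by (apply Hp; lra). nra. Qed.
Lemma mono_lt f f' lo hi : (forall y, lo <= y <= hi -> derivable_pt_lim f y (f' y)) ->
  (forall y, lo <= y <= hi -> 0 < f' y) -> forall u v, lo <= u -> u < v -> v <= hi -> f u < f v.
Proof. intros Hd Hp u v H1 H2 H3. destruct (mv_basic f f' lo hi u v Hd H1 (Rlt_le _ _ H2) H3) as [c [Hc E]].
  rewrite E. assert (0 < f' c) by (apply Hp; lra). nra. Qed.
Lemma anti_le f f' lo hi : (forall y, lo <= y <= hi -> derivable_pt_lim f y (f' y)) ->
  (forall y, lo <= y <= hi -> f' y <= 0) -> forall u v, lo <= u -> u <= v -> v <= hi -> f v <= f u.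
Proof. intros Hd Hp u v H1 H2 H3. destruct (mv_basic f f' lo hi u v Hd H1 H2 H3) as [c [Hc E]].
  rewrite E. assert (f' c <= 0) by (apply Hp; lra). nra. Qed.
Lemma lip_bound f f' lo hi A B : (forall y, lo <= y <= hi -> derivable_pt_lim f y (f' y)) ->
  (forall y, lo <= y <= hi -> A <= f' y <= B) -> forall u v, lo <= u <= hi -> lo <= v <= hi ->
  Rabs (f v - f u) <= Rmax (-A) B * Rabs (v - u).
Proof. intros Hd Hb u v Hu Hv.
  assert (K : forall u v, lo <= u -> u <= v -> v <= hi -> Rabs (f v - f u) <= Rmax (-A) B * Rabs (v - u)).
  { clear u v Hu Hv. intros u v H1 H2 H3. destruct (mv_basic f f' lo hi u v Hd H1 H2 H3) as [c [Hc E]].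
    rewrite E. replace (f u + f' c * (v - u) - f u) with (f' c * (v - u)) by ring.
    rewrite Rabs_mult. apply Rmult_le_compat_r. apply Rabs_pos.
    assert (A <= f' c <= B) by (apply Hb; lra).
    unfold Rabs at 1; destruct (Rcase_abs (f' c)); [apply Rle_trans with (-A); [lra|apply Rmax_l] | apply Rle_trans with B; [lra | apply Rmax_r]]. }
  destruct (Rle_dec u v). apply K; lra.
  rewrite Rabs_minus_sym, (Rabs_minus_sym v u). apply K; lra. Qed.

Lemma spos k : (0 <= k)%Z -> 0 < IZR (2^k).
Proof. intro H. apply IZR_lt. apply Z.pow_pos_nonneg; lia. Qed.

Lemma box_ok k lo hi x : (0 <= k)%Z -> Q2R lo <= x <= Q2R hi -> inF (2^k) (box k lo hi) x.
Proof. intros Hk [H1 H2]. unfold inF, box; cbn [fst snd]. pose proof (spos k Hk).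
  set (ss := (2^k)%Z) in *.
  pose proof (Qfloor_le (lo * (ss#1))) as A. pose proof (Qle_ceiling (hi * (ss#1))) as B.
  apply Qle_Rle in A. apply Qle_Rle in B. rewrite Q2R_mult in A, B.
  assert (E : forall z, Q2R (inject_Z z) = IZR z) by (intro; unfold Q2R, inject_Z; simpl; field).
  assert (E2 : Q2R (ss # 1) = IZR ss) by (unfold Q2R; simpl; field).
  rewrite E, E2 in A. rewrite E, E2 in B. split.
  - apply Rmult_le_reg_r with (IZR ss); auto. unfold Rdiv; rewrite Rmult_assoc, Rinv_l by lra. nra.
  - apply Rmult_le_reg_r with (IZR ss); auto. unfold Rdiv; rewrite Rmult_assoc, Rinv_l by lra. nra.
Qed.

Lemma toQ_R k m : (0 <= k)%Z -> Q2R (toQ k m) = IZR m / IZR (2^k).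
Proof. intro Hk. unfold toQ, Q2R. simpl. rewrite Z2Pos.id. reflexivity. apply Z.pow_pos_nonneg; lia. Qed.

Lemma ev_ok k e lo hi J x : (0 <= k)%Z -> ev k e (box k lo hi) = Some J -> Q2R lo <= x <= Q2R hi ->
  dom e x /\ inF (2^k) J (evalR e x).
Proof. intros Hk H Hx. unfold ev in H.
  set (ss := (2^k)%Z) in *. set (ss2 := (ss*ss)%Z) in *.
  assert (Hs : ss = (2^k)%Z) by reflexivity. assert (Hs2 : ss2 = (ss*ss)%Z) by reflexivity.
  pose proof (spos k Hk) as SP. fold ss in SP.
  destruct (evalF k ss ss2 (k0F ss) cc (0,0)%Z) as [kF|] eqn:E; [|discriminate].
  assert (I0 : inF ss (0,0)%Z 0) by (unfold inF; simpl; unfold Rdiv; rewrite Rmult_0_l; lra).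
  assert (K0 : inF ss (k0F ss) (r_param / sqrt 2)).
  { unfold inF, k0F; cbn [fst snd]. rewrite !mult_IZR.
    replace (IZR (-2) * IZR ss / IZR ss) with (-2) by (field; lra).
    replace (IZR 2 * IZR ss / IZR ss) with 2 by (field; lra).
    assert (1 <= sqrt 2) by (rewrite <- sqrt_1; apply sqrt_le_1_alt; lra).
    unfold r_param. split. apply Rle_trans with 0. lra. unfold Rdiv. apply Rmult_le_pos. lra. left; apply Rinv_0_lt_compat; lra.
    apply Rmult_le_reg_r with (sqrt 2). lra. unfold Rdiv. rewrite Rmult_assoc, Rinv_l by lra. lra. }
  destruct (evalF_ok k ss ss2 (k0F ss) Hk Hs Hs2 K0 cc _ _ 0 E I0) as [_ KF].
  apply (evalF_ok k ss ss2 kF Hk Hs Hs2 KF e (box k lo hi)); auto. apply box_ok; auto.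
Qed.

Lemma last_indep (l : list Q) : forall a d d', List.last (a :: l) d = List.last (a :: l) d'.
Proof. induction l as [|b l IH]; intros; simpl; auto. specialize (IH b d d'). simpl in IH. exact IH. Qed.

Lemma chk_ok t r : forall x0 x1, chk t x0 (x1 :: r) = true -> forall x, Q2R x0 <= x <= Q2R (List.last (x1 :: r) x0) ->
  exists lo hi, t lo hi = true /\ Q2R lo <= x <= Q2R hi.
Proof. induction r as [|x2 r IH]; intros x0 x1 H x Hx.
  - simpl in H, Hx. destruct (t x0 x1) eqn:E; [|discriminate]. exists x0, x1; auto.
  - cbn [chk] in H. destruct (t x0 x1) eqn:E; [|discriminate].
    destruct (Rle_dec x (Q2R x1)).
    + exists x0, x1. split; auto. lra.
    + apply (IH x1 x2 H). split. lra. replace (List.last (x2 :: r) x1) with (List.last (x1 :: x2 :: r) x0). lra.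
      change (List.last (x1 :: x2 :: r) x0) with (List.last (x2 :: r) x0). apply last_indep.
Qed.

Lemma mv_generic f f' lo hi m A B rA rW :
  (forall y, lo <= y <= hi -> derivable_pt_lim f y (f' y)) ->
  (forall y, lo <= y <= hi -> A <= f' y <= B) -> lo <= m <= hi ->
  Rmax (-A) B <= rA -> Rmax (hi - m) (m - lo) <= rW ->
  forall x, lo <= x <= hi -> f m - rA * rW <= f x <= f m + rA * rW.
Proof. intros Hd Hb Hm HA HW x Hx.
  pose proof (lip_bound f f' lo hi A B Hd Hb m x Hm Hx) as L.
  assert (A <= B) by (destruct (Hb m Hm); lra).
  assert (0 <= Rmax (-A) B).
  { destruct (Rle_dec 0 B). apply Rle_trans with B; [lra|apply Rmax_r]. apply Rle_trans with (-A); [lra|apply Rmax_l]. }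
  assert (Rabs (x - m) <= Rmax (hi - m) (m - lo)).
  { unfold Rabs; destruct (Rcase_abs (x - m)); [apply Rle_trans with (m - lo); [lra|apply Rmax_r] |
      apply Rle_trans with (hi - m); [lra|apply Rmax_l]]. }
  assert (0 <= Rabs (x - m)) by apply Rabs_pos.
  assert (Rmax (-A) B * Rabs (x - m) <= rA * rW).
  { apply Rmult_le_compat; auto; lra. }
  pose proof (Rle_abs (f x - f m)). pose proof (Rle_abs (-(f x - f m))). rewrite Rabs_Ropp in H5. lra.
Qed.

Lemma ddpos_ok k lo hi : (0 <= k)%Z -> ddpos k lo hi = true -> forall x, Q2R lo <= x <= Q2R hi -> dom Dn x /\ 0 < evalR dDn x.
Proof. unfold ddpos. intros Hk H x Hx.
  destruct (ev k Dn (box k lo hi)) as [J1|] eqn:E1; [|discriminate].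
  destruct (ev k dDn (box k lo hi)) as [[m1 M1]|] eqn:E2; [|discriminate].
  apply Z.ltb_lt in H. destruct (ev_ok _ _ _ _ _ x Hk E1 Hx) as [D _].
  destruct (ev_ok _ _ _ _ _ x Hk E2 Hx) as [_ [K _]]. cbn [fst] in K. split; auto.
  pose proof (spos k Hk). assert (0 < IZR m1) by (apply IZR_lt; auto).
  assert (0 < IZR m1 / IZR (2^k)) by (unfold Rdiv; apply Rmult_lt_0_compat; auto; apply Rinv_0_lt_compat; lra). lra.
Qed.

Lemma tpos_ok k lo hi : (0 <= k)%Z -> tpos k lo hi = true -> forall x, Q2R lo <= x <= Q2R hi -> dom ET x /\ 0 < evalR dET x.
Proof. unfold tpos. intros Hk H x Hx.
  destruct (ev k ET (box k lo hi)) as [J1|] eqn:E1; [|discriminate].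
  destruct (ev k dET (box k lo hi)) as [[m1 M1]|] eqn:E2; [|discriminate].
  apply Z.ltb_lt in H. destruct (ev_ok _ _ _ _ _ x Hk E1 Hx) as [D _].
  destruct (ev_ok _ _ _ _ _ x Hk E2 Hx) as [_ [K _]]. cbn [fst] in K. split; auto.
  pose proof (spos k Hk). assert (0 < IZR m1) by (apply IZR_lt; auto).
  assert (0 < IZR m1 / IZR (2^k)) by (unfold Rdiv; apply Rmult_lt_0_compat; auto; apply Rinv_0_lt_compat; lra). lra.
Qed.

Lemma dDn_eq : deriv Dn = dDn. Proof. vm_compute. reflexivity. Qed.
Lemma dET_eq : deriv ET = dET. Proof. vm_compute. reflexivity. Qed.

Lemma Dn_deriv x : dom Dn x -> derivable_pt_lim (evalR Dn) x (evalR dDn x).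
Proof. intro H. rewrite <- dDn_eq. apply deriv_ok; auto. Qed.
Lemma ET_deriv x : dom ET x -> derivable_pt_lim (evalR ET) x (evalR dET x).
Proof. intro H. rewrite <- dET_eq. apply deriv_ok; auto. Qed.

Lemma mid_R lo hi : Q2R (mid lo hi) = (Q2R lo + Q2R hi) / 2.
Proof. unfold mid. rewrite (Qeq_eqR _ _ (Qred_correct _)). rewrite Q2R_mult, Q2R_plus.
  unfold Q2R at 3; simpl. field. Qed.

Section KS.
Variable k : Z.
Hypothesis Hk : (0 <= k)%Z.
Let ss := (2^k)%Z.
Lemma Zdiv_le_R a b : (a <= b)%Z -> IZR a / IZR ss <= IZR b / IZR ss.
Proof. intro H. pose proof (spos k Hk). unfold Rdiv. apply Rmult_le_compat_r. left; apply Rinv_0_lt_compat; unfold ss; lra. apply IZR_le; auto. Qed.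
Lemma Zs_pos a : (0 < a)%Z -> 0 < IZR a / IZR ss.
Proof. intro H. pose proof (spos k Hk). apply IZR_lt in H. unfold Rdiv. apply Rmult_lt_0_compat; auto. apply Rinv_0_lt_compat; unfold ss; lra. Qed.
Lemma Zs_neg a : (a < 0)%Z -> IZR a / IZR ss < 0.
Proof. intro H. pose proof (spos k Hk). apply IZR_lt in H. assert (0 < / IZR ss) by (apply Rinv_0_lt_compat; unfold ss; lra). unfold Rdiv. nra. Qed.
Lemma Zs_ge0 a : (0 <= a)%Z -> 0 <= IZR a / IZR ss.
Proof. intro H. pose proof (spos k Hk). apply IZR_le in H. assert (0 < / IZR ss) by (apply Rinv_0_lt_compat; unfold ss; lra). unfold Rdiv. nra. Qed.
Lemma Zs_le0 a : (a <= 0)%Z -> IZR a / IZR ss <= 0.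
Proof. intro H. pose proof (spos k Hk). apply IZR_le in H. assert (0 < / IZR ss) by (apply Rinv_0_lt_compat; unfold ss; lra). unfold Rdiv. nra. Qed.
End KS.

Lemma qmax_Rmax a b : Rmax (Q2R a) (Q2R b) <= Q2R (qmax a b).
Proof. destruct (qmax_R a b). apply Rmax_lub; auto. Qed.

Lemma mvt_ok k (sg : bool) lo hi : (0 <= k)%Z -> mvt k sg lo hi = true -> forall x, Q2R lo <= x <= Q2R hi ->
  if sg then 0 < evalR Dn x else evalR Dn x < 0.
Proof. unfold mvt. set (m := mid lo hi). intros Hk H x Hx.
  assert (Hm : Q2R lo <= Q2R m <= Q2R hi) by (unfold m; rewrite mid_R; lra).
  assert (Hlo : Q2R lo <= Q2R lo <= Q2R hi) by lra. assert (Hhi : Q2R hi <= Q2R hi <= Q2R hi) by lra.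
  destruct (ev k Dn (box k lo hi)) as [J1|] eqn:E1; [|discriminate].
  destruct (ev k dDn (box k lo hi)) as [[m1 M1]|] eqn:E2; [|discriminate].
  destruct (ev k Dn (box k m m)) as [[dm um]|] eqn:E3; [|discriminate].
  destruct (ev k Dn (box k lo lo)) as [[dl ul]|] eqn:E4; [|discriminate].
  destruct (ev k Dn (box k hi hi)) as [[dh uh]|] eqn:E5; [|discriminate].
  assert (Hd : forall y, Q2R lo <= y <= Q2R hi -> derivable_pt_lim (evalR Dn) y (evalR dDn y)).
  { intros y Hy. apply Dn_deriv. destruct (ev_ok _ _ _ _ _ y Hk E1 Hy); auto. }
  assert (Hb : forall y, Q2R lo <= y <= Q2R hi -> IZR m1 / IZR (2^k) <= evalR dDn y <= IZR M1 / IZR (2^k)).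
  { intros y Hy. destruct (ev_ok _ _ _ _ _ y Hk E2 Hy) as [_ K]. exact K. }
  destruct (ev_ok _ _ _ _ _ _ Hk E3 (conj (Rle_refl (Q2R m)) (Rle_refl (Q2R m)))) as [_ [K3a K3b]].
  destruct (ev_ok _ _ _ _ _ _ Hk E4 (conj (Rle_refl (Q2R lo)) (Rle_refl (Q2R lo)))) as [_ [K4a K4b]].
  destruct (ev_ok _ _ _ _ _ _ Hk E5 (conj (Rle_refl (Q2R hi)) (Rle_refl (Q2R hi)))) as [_ [K5a K5b]].
  cbn [fst snd] in *.
  set (rA := qmax (- toQ k m1) (toQ k M1)). set (rW := qmax (hi - m) (m - lo)).
  assert (HA : Rmax (- (IZR m1 / IZR (2^k))) (IZR M1 / IZR (2^k)) <= Q2R rA).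
  { unfold rA. eapply Rle_trans; [|apply qmax_Rmax]. rewrite Q2R_opp, !(toQ_R k _ Hk). lra. }
  assert (HW : Rmax (Q2R hi - Q2R m) (Q2R m - Q2R lo) <= Q2R rW).
  { unfold rW. eapply Rle_trans; [|apply qmax_Rmax]. rewrite !Q2R_minus. lra. }
  pose proof (mv_generic _ _ _ _ _ _ _ _ _ Hd Hb Hm HA HW x Hx) as G.
  destruct sg.
  - apply orb_true_iff in H. destruct H as [H|H]. apply orb_true_iff in H. destruct H as [H|H].
    + apply Qltb_R in H. rewrite Q2R0, Q2R_minus, Q2R_mult, (toQ_R k _ Hk) in H. unfold rA, rW in G. lra.
    + apply andb_true_iff in H. destruct H as [H1 H2]. apply Z.leb_le in H1. apply Z.ltb_lt in H2.
      apply (Zs_le0 k Hk) in H1. apply (Zs_pos k Hk) in H2.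
      assert (evalR Dn (Q2R hi) <= evalR Dn x).
      { apply (anti_le _ _ _ _ Hd); try lra. intros y Hy. destruct (Hb y Hy); lra. }
      lra.
    + apply andb_true_iff in H. destruct H as [H1 H2]. apply Z.leb_le in H1. apply Z.ltb_lt in H2.
      apply (Zs_ge0 k Hk) in H1. apply (Zs_pos k Hk) in H2.
      assert (evalR Dn (Q2R lo) <= evalR Dn x).
      { apply (mono_le _ _ _ _ Hd); try lra. intros y Hy. destruct (Hb y Hy); lra. }
      lra.
  - apply orb_true_iff in H. destruct H as [H|H]. apply orb_true_iff in H. destruct H as [H|H].
    + apply Qltb_R in H. rewrite Q2R0, Q2R_plus, Q2R_mult, (toQ_R k _ Hk) in H. unfold rA, rW in G. lra.
    + apply andb_true_iff in H. destruct H as [H1 H2]. apply Z.leb_le in H1. apply Z.ltb_lt in H2.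
      apply (Zs_le0 k Hk) in H1. apply (Zs_neg k Hk) in H2.
      assert (evalR Dn x <= evalR Dn (Q2R lo)).
      { apply (anti_le _ _ _ _ Hd); try lra. intros y Hy. destruct (Hb y Hy); lra. }
      lra.
    + apply andb_true_iff in H. destruct H as [H1 H2]. apply Z.leb_le in H1. apply Z.ltb_lt in H2.
      apply (Zs_ge0 k Hk) in H1. apply (Zs_neg k Hk) in H2.
      assert (evalR Dn x <= evalR Dn (Q2R hi)).
      { apply (mono_le _ _ _ _ Hd); try lra. intros y Hy. destruct (Hb y Hy); lra. }
      lra.
Qed.

Lemma mvt2_ok (sg : bool) lo hi : mvt2 sg lo hi = true -> forall x, Q2R lo <= x <= Q2R hi ->
  if sg then 0 < evalR Dn x else evalR Dn x < 0.
Proof. unfold mvt2. intros H x Hx. destruct (mvt 40 sg lo hi) eqn:E.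
  apply (mvt_ok 40 sg lo hi); auto; lia. apply (mvt_ok 110 sg lo hi); auto; lia. Qed.

Open Scope R_scope.

Definition Pf (y z : R) := z / ((1 + y ^ 2) * sqrt (1 + y ^ 2 + z ^ 2)).
Definition Qf (y z : R) := y / ((1 + z ^ 2) * sqrt (1 + y ^ 2 + z ^ 2)).

Lemma corner_alg y z dy dz s : 0 < s -> s * s = 1 + y^2 + z^2 ->
  / (1 + (y * z / (1 * s)) ^ 2) *
  (((dy * z + y * dz) * (1 * s) - (1 * ((2 * y * dy + 2 * z * dz) / (2 * s))) * (y * z)) / (1 * s) ^ 2)
  = z / ((1 + y ^ 2) * s) * dy + y / ((1 + z ^ 2) * s) * dz.
Proof. intros Hs Hss.
  assert (H1 : 1 + (y * z / (1 * s)) ^ 2 = (1 + y^2) * (1 + z^2) / (s * s)).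
  { replace ((1 + y^2) * (1 + z^2)) with (s * s + (y*z)^2) by (rewrite Hss; ring). field. lra. }
  rewrite H1.
  assert (0 < 1 + y^2) by nra. assert (0 < 1 + z^2) by nra.
  transitivity (((dy * z + y * dz) * (s * s) - (y * dy + z * dz) * (y * z)) / (s * (1 + y^2) * (1 + z^2))).
  { field. repeat split; lra. }
  rewrite Hss. field. repeat split; lra.
Qed.

Lemma corner fy fz dy dz l : derivable_pt_lim fy l dy -> derivable_pt_lim fz l dz ->
  derivable_pt_lim (fun t => Fcorner 1 (fy t) (fz t)) l (Pf (fy l) (fz l) * dy + Qf (fy l) (fz l) * dz).
Proof. intros Hy Hz. unfold Fcorner, Pf, Qf.
  set (X := fun t => 1 ^ 2 + fy t ^ 2 + fz t ^ 2).
  assert (HX : derivable_pt_lim X l (2 * fy l * dy + 2 * fz l * dz)).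
  { unfold X. eapply dpl_eq.
    apply (derivable_pt_lim_plus (fun t => 1 ^ 2 + fy t ^ 2) (fun t => fz t ^ 2)).
    apply (derivable_pt_lim_plus (fun t => 1 ^ 2) (fun t => fy t ^ 2)).
    apply derivable_pt_lim_const.
    apply (derivable_pt_lim_comp fy (fun u => u ^ 2) l dy). exact Hy. apply derivable_pt_lim_pow.
    apply (derivable_pt_lim_comp fz (fun u => u ^ 2) l dz). exact Hz. apply derivable_pt_lim_pow.
    simpl. ring. }
  assert (Xpos : forall t, 0 < X t) by (intro t; unfold X; nra).
  assert (HS : derivable_pt_lim (fun t => 1 * sqrt (X t)) l (1 * ((2 * fy l * dy + 2 * fz l * dz) / (2 * sqrt (X l))))).
  { eapply dpl_eq. apply (derivable_pt_lim_scal (fun t => sqrt (X t)) 1).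
    apply (derivable_pt_lim_comp X sqrt l _ (/ (2 * sqrt (X l))) HX). apply derivable_pt_lim_sqrt; auto.
    unfold Rdiv. ring. }
  assert (HN : derivable_pt_lim (fun t => fy t * fz t) l (dy * fz l + fy l * dz)).
  { apply (derivable_pt_lim_mult fy fz); auto. }
  assert (Sp : 0 < sqrt (X l)) by (apply sqrt_lt_R0; auto).
  assert (HG : derivable_pt_lim (fun t => fy t * fz t / (1 * sqrt (X t))) l
      (((dy * fz l + fy l * dz) * (1 * sqrt (X l)) - (1 * ((2 * fy l * dy + 2 * fz l * dz) / (2 * sqrt (X l)))) * (fy l * fz l)) / (1 * sqrt (X l)) ^ 2)).
  { eapply dpl_eq. apply (derivable_pt_lim_div (fun t => fy t * fz t) (fun t => 1 * sqrt (X t)) l _ _ HN HS). cbv beta. apply Rgt_not_eq; lra.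
    unfold Rsqr. simpl. field. lra. }
  eapply dpl_eq. apply (derivable_pt_lim_comp (fun t => fy t * fz t / (1 * sqrt (X t))) atan l _ (/ (1 + (fy l * fz l / (1 * sqrt (X l))) ^ 2)) HG).
  apply derivable_pt_lim_atan.
  pose proof (sqrt_sqrt (X l) (Rlt_le _ _ (Xpos l))) as E.
  replace (1 + fy l ^ 2 + fz l ^ 2) with (X l) by (unfold X; ring).
  rewrite <- corner_alg with (s := sqrt (X l)); auto.
  rewrite E. unfold X. ring.
Qed.

Lemma Dn_eval l : evalR Dn l =
  1/2 * (Pf (y2 l) (z2 l) + Pf (y1 l) (z2 l) - Pf (y2 l) (z1 l) - Pf (y1 l) (z1 l))
  - 1 / (2 * l ^ 2) * ((Qf (y2 l) (z2 l) - Qf (y1 l) (z2 l)) + (Qf (y2 l) (z1 l) - Qf (y1 l) (z1 l))).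
Proof. reflexivity. Qed.

Lemma dy2 l : derivable_pt_lim y2 l (1/2).
Proof. change y2 with (evalR ty2). eapply dpl_eq. apply deriv_ok. simpl. repeat split; lra.
  simpl. field. Qed.
Lemma dy1 l : derivable_pt_lim y1 l (-(1/2)).
Proof. change y1 with (evalR ty1). eapply dpl_eq. apply deriv_ok. simpl. repeat split; lra.
  simpl. field. Qed.
Lemma dz2 l : l <> 0 -> derivable_pt_lim z2 l (- (1 / (2 * l ^ 2))).
Proof. intro H. change z2 with (evalR tz2). eapply dpl_eq. apply deriv_ok. simpl. repeat split; try lra.
  simpl. field. auto. Qed.
Lemma dz1 l : l <> 0 -> derivable_pt_lim z1 l (1 / (2 * l ^ 2)).
Proof. intro H. change z1 with (evalR tz1). eapply dpl_eq. apply deriv_ok. simpl. repeat split; try lra.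
  simpl. field. auto. Qed.

Lemma Omega_deriv l : l <> 0 -> derivable_pt_lim Omega l (evalR Dn l).
Proof. intro H.
  pose proof (corner _ _ _ _ l (dy2 l) (dz2 l H)) as C22.
  pose proof (corner _ _ _ _ l (dy1 l) (dz2 l H)) as C12.
  pose proof (corner _ _ _ _ l (dy2 l) (dz1 l H)) as C21.
  pose proof (corner _ _ _ _ l (dy1 l) (dz1 l H)) as C11.
  eapply dpl_eq.
  apply (derivable_pt_lim_plus _ _ l _ _ (derivable_pt_lim_minus _ _ l _ _ (derivable_pt_lim_minus _ _ l _ _ C22 C12) C21) C11).
  rewrite Dn_eval. field. auto.
Qed.

Lemma Qf_Pf y z : Qf y z = Pf z y.
Proof. unfold Qf, Pf. replace (1 + z ^ 2 + y ^ 2) with (1 + y ^ 2 + z ^ 2) by ring. reflexivity. Qed.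

Lemma D1_zero : evalR Dn 1 = 0.
Proof. rewrite Dn_eval. rewrite !Qf_Pf.
  replace (z2 1) with (y2 1) by (unfold y2, z2; f_equal; field).
  replace (z1 1) with (y1 1) by (unfold y1, z1; f_equal; field). field. Qed.

Lemma corner_t t w z y : 0 < t -> y = w / (2 * t) ->
  Fcorner 1 y z = atan (w * z / sqrt (4 * t ^ 2 * (1 + z ^ 2) + w ^ 2)).
Proof. intros Ht Hy. unfold Fcorner. set (N := 4 * t ^ 2 * (1 + z ^ 2) + w ^ 2).
  assert (Np : 0 < N) by (unfold N; nra).
  assert (E : 1 ^ 2 + y ^ 2 + z ^ 2 = (sqrt N / (2 * t)) ^ 2).
  { rewrite Hy. replace ((sqrt N / (2 * t)) ^ 2) with ((sqrt N * sqrt N) / (4 * t^2)) by (field; lra).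
    rewrite sqrt_sqrt by lra. unfold N. field. lra. }
  rewrite E, sqrt_pow2.
  2:{ unfold Rdiv. apply Rmult_le_pos. apply sqrt_pos. left; apply Rinv_0_lt_compat; lra. }
  assert (0 < sqrt N) by (apply sqrt_lt_R0; auto).
  f_equal. rewrite Hy. field. split; lra.
Qed.

Lemma tail_eq t : 0 < t -> Omega (/ t) = evalR ET t.
Proof. intro Ht. unfold Omega, solid_angle_rect.
  assert (S2 : 0 < sqrt 2) by (apply sqrt_lt_R0; lra).
  assert (Z2 : z2 (/ t) = evalR sz2 t) by (unfold z2; simpl; field; repeat split; lra).
  assert (Z1 : z1 (/ t) = evalR sz1 t) by (unfold z1; simpl; field; repeat split; lra).
  rewrite Z2, Z1.
  rewrite (corner_t t (evalR tw2 t) (evalR sz2 t) (y2 (/ t))) by (auto; unfold y2; simpl; field; repeat split; lra).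
  rewrite (corner_t t (evalR tw1 t) (evalR sz2 t) (y1 (/ t))) by (auto; unfold y1; simpl; field; repeat split; lra).
  rewrite (corner_t t (evalR tw2 t) (evalR sz1 t) (y2 (/ t))) by (auto; unfold y2; simpl; field; repeat split; lra).
  rewrite (corner_t t (evalR tw1 t) (evalR sz1 t) (y1 (/ t))) by (auto; unfold y1; simpl; field; repeat split; lra).
  reflexivity.
Qed.

Open Scope R_scope.

Definition qa : Q := 166977459936793782921 # 100000000000000000000.
Definition qb : Q := 1669774599367937829217 # 1000000000000000000000.

Lemma C1 : chk (ddpos 40) 1 Lnear1 = true. Proof. vm_cast_no_check (eq_refl true). Qed.
Lemma C2 : chk (mvt2 true) (101#100) Lpos = true. Proof. vm_cast_no_check (eq_refl true). Qed.
Lemma C3 : chk (mvt2 false) qb Lneg = true. Proof. vm_cast_no_check (eq_refl true). Qed.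
Lemma C4 : chk (tpos 40) 0 Ltail = true. Proof. vm_cast_no_check (eq_refl true). Qed.

Lemma QR a b : Q2R (a # b) = IZR a / IZR (Zpos b). Proof. reflexivity. Qed.

Lemma P1 x : 1 <= x <= 101/100 -> dom Dn x /\ 0 < evalR dDn x.
Proof. intro Hx. pose proof C1 as K. unfold Lnear1 in K. destruct (chk_ok _ _ _ _ K x) as [lo [hi [T H]]].
  simpl List.last. unfold Q2R; simpl. lra.
  apply (ddpos_ok 40 lo hi ltac:(lia) T x H). Qed.

Lemma P2 x : 101/100 <= x <= Q2R qa -> 0 < evalR Dn x.
Proof. intro Hx. pose proof C2 as K. unfold Lpos in K. destruct (chk_ok _ _ _ _ K x) as [lo [hi [T H]]].
  simpl List.last. unfold qa in Hx. unfold Q2R in Hx |- *; simpl in Hx |- *. lra.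
  apply (mvt2_ok true lo hi T x H). Qed.
Lemma P3 x : Q2R qb <= x <= 10 -> evalR Dn x < 0.
Proof. intro Hx. pose proof C3 as K. unfold Lneg in K. destruct (chk_ok _ _ _ _ K x) as [lo [hi [T H]]].
  simpl List.last. unfold qb in Hx. unfold Q2R in Hx |- *; simpl in Hx |- *. lra.
  apply (mvt2_ok false lo hi T x H). Qed.
Lemma P4 x : 0 <= x <= 1/10 -> dom ET x /\ 0 < evalR dET x.
Proof. intro Hx. pose proof C4 as K. unfold Ltail in K. destruct (chk_ok _ _ _ _ K x) as [lo [hi [T H]]].
  simpl List.last. unfold Q2R; simpl. lra.
  apply (tpos_ok 40 lo hi ltac:(lia) T x H). Qed.

Lemma OD l : 0 < l -> derivable_pt_lim Omega l (evalR Dn l).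
Proof. intro H. apply Omega_deriv. lra. Qed.

Lemma qa_R : Q2R qa = 166977459936793782921 / 100000000000000000000.
Proof. reflexivity. Qed.
Lemma qb_R : Q2R qb = 1669774599367937829217 / 1000000000000000000000.
Proof. reflexivity. Qed.

Theorem mainTheorem4 :
  exists lmax : R,
    1.66977459936793782921 <= lmax < 1.66977459936793782922 /\
    (forall l : R, 1 <= l -> Omega l <= Omega lmax) /\
    Omega 1 < Omega lmax.
Proof.
  change 1.66977459936793782921 with (Q2R qa).
  assert (Hb : Q2R qb < 1.66977459936793782922) by (rewrite qb_R; unfold Q2R; simpl; lra).
  assert (Hab : Q2R qa <= Q2R qb) by (rewrite qa_R, qb_R; lra).
  pose proof qa_R as QA. pose proof qb_R as QB.
  assert (D0 : forall x, 1 <= x <= 101/100 -> 0 <= evalR Dn x).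
  { intros x Hx. rewrite <- D1_zero.
    apply (mono_le (evalR Dn) (evalR dDn) 1 (101/100)); try lra.
    - intros y Hy. apply Dn_deriv. apply P1; auto.
    - intros y Hy. left. apply P1; auto. }
  assert (Om1 : forall u v, 1 <= u -> u <= v -> v <= 101/100 -> Omega u <= Omega v).
  { apply (mono_le Omega (evalR Dn) 1 (101/100)).
    - intros y Hy. apply OD. lra.
    - intros y Hy. apply D0; auto. }
  assert (Om2 : forall u v, 101/100 <= u -> u < v -> v <= Q2R qa -> Omega u < Omega v).
  { apply (mono_lt Omega (evalR Dn) (101/100) (Q2R qa)).
    - intros y Hy. apply OD. lra.
    - intros y Hy. apply P2; auto. }
  assert (Om3 : forall u v, Q2R qb <= u -> u <= v -> v <= 10 -> Omega v <= Omega u).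
  { apply (anti_le Omega (evalR Dn) (Q2R qb) 10).
    - intros y Hy. apply OD. lra.
    - intros y Hy. left. apply P3; auto. }
  assert (Om4 : forall l, 10 <= l -> Omega l <= Omega 10).
  { intros l Hl.
    assert (Ps : forall u v, 0 <= u -> u <= v -> v <= 1/10 -> evalR ET u <= evalR ET v).
    { apply (mono_le (evalR ET) (evalR dET) 0 (1/10)).
      - intros y Hy. apply ET_deriv. apply P4; auto.
      - intros y Hy. left. apply P4; auto. }
    assert (Hl' : 0 < / l) by (apply Rinv_0_lt_compat; lra).
    assert (Hl'' : / l <= 1/10).
    { replace (1/10) with (/ 10) by field. apply Rinv_le_contravar; lra. }
    rewrite <- (Rinv_inv l). rewrite tail_eq by auto.
    replace 10 with (/ (1/10)) by field. rewrite tail_eq by lra.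
    apply Ps; lra. }
  destruct (continuity_ab_maj Omega (Q2R qa) (Q2R qb) Hab) as [M [HM HMr]].
  { intros c Hc. apply derivable_continuous_pt. exists (evalR Dn c). apply OD. lra. }
  exists M. split; [lra|].
  assert (Ha_le : Omega (Q2R qa) <= Omega M) by (apply HM; lra).
  assert (Hb_le : Omega (Q2R qb) <= Omega M) by (apply HM; lra).
  assert (O1 : Omega 1 <= Omega (101/100)) by (apply Om1; lra).
  assert (O2 : Omega (101/100) < Omega (Q2R qa)) by (apply Om2; lra).
  split; [|lra].
  intros l Hl.
  destruct (Rle_dec l (101/100)).
  { assert (Omega l <= Omega (101/100)) by (apply Om1; lra). lra. }
  destruct (Rle_dec l (Q2R qa)).
  { destruct (Req_dec l (Q2R qa)) as [E|E]. subst; lra.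
    assert (Omega l < Omega (Q2R qa)) by (apply Om2; lra). lra. }
  destruct (Rle_dec l (Q2R qb)).
  { apply HM; lra. }
  destruct (Rle_dec l 10).
  { assert (Omega l <= Omega (Q2R qb)) by (apply Om3; lra). lra. }
  assert (Omega l <= Omega 10) by (apply Om4; lra).
  assert (Omega 10 <= Omega (Q2R qb)) by (apply Om3; lra). lra.
Qed.
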